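(* Let $\boldsymbol X \in \mathbb{R}^{n\times d}$, $\boldsymbol y \in \mathbb{R}^n$, $\boldsymbol M = \boldsymbol X^\top \boldsymbol X$, $\boldsymbol r = \boldsymbol X^\top \boldsymbol y$. Assume (A1) $\boldsymbol r > \mathbf 0$ and (A2) $M_{ij}\le 0$ for all $i\neq j$. Consider the ODE $$\frac{\mathrm d \theta_i}{\mathrm d t} = \theta_i\Big(r_i - \sum_{j=1}^d M_{ij}\theta_j\Big),\quad i=1,\dots,d.$$ For every $I\subset\{1,\dots,d\}$, the matrix $\boldsymbol M_{II}$ is invertible and there exists a unique fixed point $\boldsymbol\theta\ge\mathbf 0$ of this ODE whose support $\{i:\theta_i>0\}$ equals $I$; it is given by $\boldsymbol\theta_I = (\boldsymbol M_{II})^{-1}\boldsymbol r_I$ and $\boldsymbol\theta_{I^c}=\mathbf 0$. There are thus $2^d$ fixed points of the ODE.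
   Context: Vector inequalities are coordinatewise. For $I\subset\{1,\dots,d\}$, $I^c$ is its complement, $\boldsymbol\theta_I$ is the subvector of coordinates in $I$, and $\boldsymbol M_{II}$ is the principal submatrix with rows and columns indexed by $I$. *)

(* Defs.v *)
From HB Require Import structures.
From mathcomp Require Import all_boot all_order all_algebra.
Set Implicit Arguments. Unset Strict Implicit. Unset Printing Implicit Defensive.
Import Order.TTheory GRing.Theory Num.Theory.
Local Open Scope ring_scope.

(* Vectors in R^d are column vectors 'cV[R]_d; index sets I are {set 'I_d}.
   The coordinates of I are enumerated increasingly via enum_val. *)

Definition subII (R : Type) (d : nat) (M : 'M[R]_d) (I : {set 'I_d})
  : 'M[R]_#|I| := \matrix_(k < #|I|, l < #|I|) M (enum_val k) (enum_val l).

Definition subI (R : Type) (d : nat) (v : 'cV[R]_d) (I : {set 'I_d})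
  : 'cV[R]_#|I| := \col_(k < #|I|) v (enum_val k) 0.

Definition lv_fixed_point (R : pzRingType) (d : nat) (M : 'M[R]_d)
    (r theta : 'cV[R]_d) : Prop :=
  forall i : 'I_d, theta i 0 * (r i 0 - \sum_(j < d) M i j * theta j 0) = 0.

Definition nonneg (R : numDomainType) (d : nat) (theta : 'cV[R]_d) : Prop :=
  forall i : 'I_d, 0 <= theta i 0.

Definition supp (R : numDomainType) (d : nat) (theta : 'cV[R]_d) : {set 'I_d} :=
  [set i | 0 < theta i 0].

(* Main.v *)
Require Import Defs.
From HB Require Import structures.
From mathcomp Require Import all_boot all_order all_algebra.
Import Order.TTheory GRing.Theory Num.Theory.
Local Open Scope ring_scope.

Lemma gram_nonneg (R : realFieldType) n k (Y : 'M[R]_(n,k)) (y : 'cV[R]_n)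
  (th : 'cV[R]_k) :
  (forall i, 0 < (Y^T *m y) i 0) ->
  (forall i j, i != j -> (Y^T *m Y) i j <= 0) ->
  (forall i, 0 <= ((Y^T *m Y) *m th) i 0) ->
  forall i, 0 <= th i 0.
Proof.
move=> spos offd Nth.
set N := Y^T *m Y in offd Nth *.
pose u := \col_i Num.max (- th i 0) 0.
have u0 i : 0 <= u i 0 by rewrite mxE le_max lexx orbT.
have uth i : - th i 0 <= u i 0 by rewrite mxE le_max lexx.
have key i : u i 0 * (N *m u) i 0 <= 0.
  case: (ltP (th i 0) 0) => hi; last first.
    by rewrite mxE max_r ?mul0r // oppr_le0.
  have ui : u i 0 = - th i 0 by rewrite mxE max_l // oppr_ge0 ltW.
  rewrite ui; apply: mulr_ge0_le0; first by rewrite oppr_ge0 ltW.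
  have h2 : - (N *m th) i 0 <= 0 by rewrite oppr_le0.
  apply: (le_trans _ h2).
  rewrite !mxE -sumrN; apply: ler_sum => j _.
  case: (eqVneq i j) => [<-|ij].
    by rewrite ui mulrN.
  by rewrite -mulrN; apply: ler_wnM2l; [exact: offd|exact: uth].
have Qge : 0 <= ((Y *m u)^T *m (Y *m u)) 0 0.
  rewrite mxE; apply: sumr_ge0 => a _; rewrite mxE; rewrite -expr2; exact: sqr_ge0.
have Qeq : ((Y *m u)^T *m (Y *m u)) 0 0 = \sum_i u i 0 * (N *m u) i 0.
  rewrite trmx_mul -mulmxA (mulmxA Y^T) -/N mxE.
  by apply: eq_bigr => j _; rewrite mxE.
have Q0 : ((Y *m u)^T *m (Y *m u)) 0 0 = 0.
  apply/eqP; rewrite eq_le Qge andbT Qeq.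
  by apply: sumr_le0 => j _; exact: key.
have Yu : Y *m u = 0.
  apply/matrixP => a b; rewrite (ord1 b) [X in _ = X]mxE.
  have nn : forall c : 'I_n, true -> 0 <= (Y *m u)^T 0 c * (Y *m u) c 0.
    by move=> c _; rewrite mxE; rewrite -expr2; exact: sqr_ge0.
  move: Q0; rewrite mxE => /(psumr_eq0P nn) => H.
  have := H a isT; rewrite mxE => /eqP; rewrite -expr2 sqrf_eq0 => /eqP -> //.
have su : \sum_i (Y^T *m y) i 0 * u i 0 = 0.
  have : ((Y^T *m y)^T *m u) 0 0 = 0.
    by rewrite trmx_mul trmxK -mulmxA Yu mulmx0 mxE.
  rewrite mxE => H; apply: etrans H; apply: eq_bigr => j _; by rewrite [in RHS]mxE.
move=> i.
have nn : forall j : 'I_k, true -> 0 <= (Y^T *m y) j 0 * u j 0.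
  by move=> j _; apply: mulr_ge0; [exact: ltW|exact: u0].
have := @psumr_eq0P _ _ _ _ nn su i isT.
move/eqP; rewrite mulf_eq0 (gt_eqF (spos i)) /= => /eqP ui.
by have := uth i; rewrite ui oppr_le0.
Qed.

Lemma gram_unit (R : realFieldType) n k (Y : 'M[R]_(n,k)) (y : 'cV[R]_n) :
  (forall i, 0 < (Y^T *m y) i 0) ->
  (forall i j, i != j -> (Y^T *m Y) i j <= 0) ->
  (Y^T *m Y) \in unitmx.
Proof.
move=> spos offd.
rewrite -row_free_unit -kermx_eq0; apply/eqP/row_matrixP => i; rewrite row0.
set v := row i _.
have hv : v *m (Y^T *m Y) = 0 by apply/sub_kermxP; exact: row_sub.
have hv' : (Y^T *m Y) *m v^T = 0.
  have NT : (Y^T *m Y)^T = Y^T *m Y by rewrite trmx_mul trmxK.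
  by rewrite -{1}NT -trmx_mul hv trmx0.
have h1 := @gram_nonneg _ _ _ Y y (v^T) spos offd.
have h2 := @gram_nonneg _ _ _ Y y (- v^T) spos offd.
apply/matrixP => a b; rewrite (ord1 a) mxE.
apply/eqP; rewrite eq_le; apply/andP; split.
  have := h2 _ b; rewrite !mxE oppr_ge0; apply => j.
  by rewrite mulmxN hv' oppr0 mxE.
have := h1 _ b; rewrite !mxE; apply => j.
by rewrite hv' mxE.
Qed.

Lemma gram_pos (R : realFieldType) n k (Y : 'M[R]_(n,k)) (y : 'cV[R]_n) :
  (forall i, 0 < (Y^T *m y) i 0) ->
  (forall i j, i != j -> (Y^T *m Y) i j <= 0) ->
  forall i, 0 < (invmx (Y^T *m Y) *m (Y^T *m y)) i 0.
Proof.
move=> spos offd.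
set th := invmx _ *m _.
have Nth : (Y^T *m Y) *m th = Y^T *m y by rewrite mulKVmx // (@gram_unit _ _ _ Y y spos offd).
have th0 := @gram_nonneg _ _ _ Y y (th) spos offd.
have th0' : forall i, 0 <= th i 0.
  by apply: th0 => i; rewrite Nth ltW.
move=> i; rewrite lt_neqAle th0' andbT eq_sym; apply/negP => /eqP hi.
have := spos i; rewrite -Nth mxE.
have -> : \sum_j (Y^T *m Y) i j * th j 0 = \sum_(j | j != i) (Y^T *m Y) i j * th j 0.
  by rewrite (bigD1 i) //= hi mulr0 add0r.
rewrite ltNge => /negP; apply; apply: sumr_le0 => j ji.
by apply: mulr_le0_ge0; [apply: offd; rewrite eq_sym|exact: th0'].
Qed.

Definition Pm (R : realFieldType) (d : nat) (I : {set 'I_d}) : 'M[R]_(d, #|I|) :=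
  \matrix_(i, k) ((enum_val k == i)%:R).
Arguments Pm R {d} I.

Lemma sum_ind (R : realFieldType) d (a : 'I_d) (f : 'I_d -> R) :
  \sum_i (a == i)%:R * f i = f a.
Proof.
rewrite (bigD1 a) //= eqxx mul1r big1 ?addr0 // => i ia.
by rewrite eq_sym (negbTE ia) mul0r.
Qed.

Lemma PtV (R : realFieldType) d (I : {set 'I_d}) m (v : 'M[R]_(d, m)) k j :
  ((Pm R I)^T *m v) k j = v (enum_val k) j.
Proof.
rewrite mxE -(@sum_ind R d (enum_val k) (fun i => v i j)).
by apply: eq_bigr => i _; rewrite !mxE.
Qed.

Lemma subI_P (R : realFieldType) d (I : {set 'I_d}) (v : 'cV[R]_d) :
  subI v I = (Pm R I)^T *m v.
Proof. by apply/matrixP => k j; rewrite PtV mxE (ord1 j). Qed.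

Lemma subII_P (R : realFieldType) d (I : {set 'I_d}) (M : 'M[R]_d) :
  subII M I = (Pm R I)^T *m M *m Pm R I.
Proof.
apply/matrixP => k l; rewrite mxE [RHS]mxE.
under eq_bigr => j _ do rewrite PtV mxE mulrC.
by rewrite sum_ind.
Qed.

Lemma PtP (R : realFieldType) d (I : {set 'I_d}) :
  (Pm R I)^T *m Pm R I = 1%:M.
Proof.
apply/matrixP => k l; rewrite PtV !mxE.
by rewrite (inj_eq enum_val_inj) eq_sym.
Qed.

Lemma P_out (R : realFieldType) d (I : {set 'I_d}) (t : 'cV[R]_#|I|) i :
  i \notin I -> (Pm R I *m t) i 0 = 0.
Proof.
move=> iI; rewrite mxE big1 // => k _; rewrite mxE.
case: eqP => [e|]; last by rewrite mul0r.
by move: iI; rewrite -e enum_valP.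
Qed.

Lemma P_ev (R : realFieldType) d (I : {set 'I_d}) (t : 'cV[R]_#|I|) k :
  (Pm R I *m t) (enum_val k) 0 = t k 0.
Proof. by rewrite -PtV mulmxA PtP mul1mx. Qed.

Lemma PPt (R : realFieldType) d (I : {set 'I_d}) (v : 'cV[R]_d) :
  (forall i, i \notin I -> v i 0 = 0) -> Pm R I *m ((Pm R I)^T *m v) = v.
Proof.
move=> out; apply/matrixP => i j; rewrite (ord1 j).
case: (boolP (i \in I)) => Hi; last by rewrite P_out // out.
by rewrite -{1}(enum_rankK_in Hi Hi) P_ev PtV (enum_rankK_in Hi Hi).
Qed.

Lemma fixed_props (R : realFieldType) (n d : nat)
    (X : 'M[R]_(n, d)) (y : 'cV[R]_n) (I : {set 'I_d}) :
  (forall i : 'I_d, 0 < (X^T *m y) i 0) ->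
  (forall i j : 'I_d, i != j -> (X^T *m X) i j <= 0) ->
  let M := X^T *m X in let r := X^T *m y in
  let th := Pm R I *m (invmx (subII M I) *m subI r I) in
  subII M I \in unitmx /\ [/\ nonneg th, lv_fixed_point M r th, supp th = I,
      (subI th I = invmx (subII M I) *m subI r I /\
       forall i : 'I_d, i \notin I -> th i 0 = 0) &
      (forall theta' : 'cV[R]_d,
         nonneg theta' -> lv_fixed_point M r theta' -> supp theta' = I ->
         theta' = th)].
Proof.
move=> rpos offd M r th.
set P := Pm R I.
set Y := X *m P.
have hN : subII M I = Y^T *m Y.
  by rewrite subII_P /M trmx_mul !mulmxA.
have hs : subI r I = Y^T *m y.
  by rewrite subI_P /r trmx_mul !mulmxA.
have spos : forall k, 0 < (Y^T *m y) k 0.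
  by move=> k; rewrite -hs mxE; exact: rpos.
have offY : forall k l, k != l -> (Y^T *m Y) k l <= 0.
  move=> k l kl; rewrite -hN mxE; apply: offd.
  by apply: contra kl => /eqP /enum_val_inj ->.
have hU : subII M I \in unitmx by rewrite hN; exact: (@gram_unit _ _ _ Y y spos offY).
set t := invmx (subII M I) *m subI r I.
have tpos : forall k, 0 < t k 0.
  by move=> k; rewrite /t hN hs; exact: (@gram_pos _ _ _ Y y spos offY).
have Nt : subII M I *m t = subI r I by rewrite /t mulKVmx.
have thev : forall k, th (enum_val k) 0 = t k 0 by move=> k; exact: P_ev.
have thout : forall i, i \notin I -> th i 0 = 0 by move=> i; exact: P_out.
have thpos : forall i, i \in I -> 0 < th i 0.
  by move=> i Hi; rewrite -(enum_rankK_in Hi Hi) thev.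
have fixin : forall (v : 'cV[R]_d) (k : 'I_#|I|),
    subII M I *m ((P^T) *m v) = subI r I ->
    (forall i, i \notin I -> v i 0 = 0) ->
    (M *m v) (enum_val k) 0 = r (enum_val k) 0.
  move=> v k Nv vout.
  rewrite -!(@PtV R d I) -!subI_P -Nv subII_P subI_P -!mulmxA.
  by rewrite (@PPt R d I v vout).
split => //; split.
- by move=> i; case: (boolP (i \in I)) => Hi; [exact: ltW (thpos _ Hi)|rewrite thout].
- move=> i; case: (boolP (i \in I)) => Hi; last by rewrite thout // mul0r.
  rewrite -(enum_rankK_in Hi Hi).
  have := fixin th (enum_rank_in Hi i).
  have Pt : P^T *m th = t by rewrite /th mulmxA PtP mul1mx.
  rewrite Pt => /(_ Nt thout).
  by rewrite mxE => ->; rewrite subrr mulr0.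
- apply/setP => i; rewrite inE; case: (boolP (i \in I)) => Hi.
    exact: thpos.
  by rewrite thout // ltxx.
- split => //.
  by rewrite subI_P /th mulmxA PtP mul1mx.
move=> th' nn fx sp.
have out' : forall i, i \notin I -> th' i 0 = 0.
  move=> i; rewrite -sp inE => /negP h.
  by apply/eqP; rewrite eq_le nn andbT leNgt; apply/negP.
have in' : forall k : 'I_#|I|, (M *m th') (enum_val k) 0 = r (enum_val k) 0.
  move=> k; have := fx (enum_val k).
  have pos : 0 < th' (enum_val k) 0.
    have Hk : enum_val k \in supp th' by rewrite sp enum_valP.
    by move: Hk; rewrite inE.
  move=> /eqP; rewrite mulf_eq0 (gt_eqF pos) /= subr_eq0 => /eqP ->.
  by rewrite mxE.
have Nv : subII M I *m (P^T *m th') = subI r I.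
  rewrite subII_P -!mulmxA (@PPt R d I th' out') subI_P.
  by apply/matrixP => k j; rewrite (ord1 j) !PtV mulmxA; exact: in'.
rewrite -(@PPt R d I th' out'); congr (_ *m _).
by rewrite /t -Nv mulKmx.
Qed.

Theorem proposition2 (R : realFieldType) (n d : nat)
    (X : 'M[R]_(n, d)) (y : 'cV[R]_n) :
  let M := X^T *m X in
  let r := X^T *m y in
  (forall i : 'I_d, 0 < r i 0) ->
  (forall i j : 'I_d, i != j -> M i j <= 0) ->
  (forall I : {set 'I_d},
      subII M I \in unitmx /\
      (exists theta : 'cV[R]_d,
         [/\ nonneg theta, lv_fixed_point M r theta, supp theta = I,
             (subI theta I = invmx (subII M I) *m subI r I /\
              forall i : 'I_d, i \notin I -> theta i 0 = 0) &
             (forall theta' : 'cV[R]_d,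
                nonneg theta' -> lv_fixed_point M r theta' -> supp theta' = I ->
                theta' = theta)])) /\
  (exists f : {set 'I_d} -> 'cV[R]_d,
     injective f /\
     (forall theta : 'cV[R]_d,
        (nonneg theta /\ lv_fixed_point M r theta) <->
        (exists I : {set 'I_d}, theta = f I))).
Proof.
move=> M r rpos offd.
have FP := fun I => @fixed_props R n d X y I rpos offd.
split.
  move=> I; have [hU [a b c e f]] := FP I.
  by split => //; eexists; split; eauto.
exists (fun I => Pm R I *m (invmx (subII M I) *m subI r I)); split.
  move=> I J eq.
  have [_ [_ _ cI _ _]] := FP I.
  have [_ [_ _ cJ _ _]] := FP J.
  by rewrite -cI -cJ eq.
move=> th; split.
  move=> [nn fx]; exists (supp th).
  have [_ [_ _ _ _ u]] := FP (supp th).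
  exact: u.
move=> [I ->].
by have [_ [a b _ _ _]] := FP I.
Qed.
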